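(* Let $\mathbb{K}^r_{c,m}$ be an $r$-uniform star-hypergraph with $m\ge 2$ edges and centre of size $c$, where $1\le c<r$. Then $\lambda(\mathbb{K}^r_{c,m})=m(r-c)+2c-1$.
   Context: An $r$-uniform hypergraph (every edge has exactly $r$ vertices) is a star-hypergraph if there is a set $\mathcal{C}\subset V$, its centre, such that $e_i\cap e_j=\mathcal{C}$ for all distinct edges $e_i,e_j$; with $m$ edges and $|\mathcal{C}|=c$ it is denoted $\mathbb{K}^r_{c,m}$ (its vertex set is the union of its edges). An $L(2,1)$-colouring of a hypergraph $\mathbb{H}=(V,E)$ is a map $f:V\to\mathbb{Z}_{\ge 0}$ such that $|f(u)-f(v)|\ge 2$ whenever $u\ne v$ lie in a common edge, and $|f(u)-f(v)|\ge 1$ whenever there are edges $e_1\ni v$, $e_2\ni u$ with $(e_1\cap e_2)\setminus\{u,v\}\ne\emptyset$. Its span is $\max f-\min f$, and $\lambda(\mathbb{H})$ is the minimum span. *)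

(* Defs.v *)
From mathcomp Require Import all_boot.
Set Implicit Arguments. Unset Strict Implicit. Unset Printing Implicit Defensive.

(* A hypergraph on the finite vertex type V is given by its edge set
   E : {set {set V}}; its vertex set is all of V. *)

Definition uniform (V : finType) (r : nat) (E : {set {set V}}) : Prop :=
  forall e, e \in E -> #|e| = r.

Definition covered_by_edges (V : finType) (E : {set {set V}}) : Prop :=
  forall v : V, exists2 e, e \in E & v \in e.

Definition is_star_centre (V : finType) (E : {set {set V}}) (C : {set V}) : Prop :=
  forall e1 e2, e1 \in E -> e2 \in E -> e1 != e2 -> e1 :&: e2 = C.

Definition L21_colouring (V : finType) (E : {set {set V}}) (f : V -> nat) : Prop :=
  (forall u v e, u != v -> e \in E -> u \in e -> v \in e ->
      (f u + 2 <= f v) || (f v + 2 <= f u)) /\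
  (forall u v e1 e2, u != v -> e1 \in E -> e2 \in E -> v \in e1 -> u \in e2 ->
      (e1 :&: e2) :\: [set u; v] != set0 -> f u != f v).

Definition max_col (V : finType) (f : V -> nat) : nat := \max_(v : V) f v.
Definition min_col (V : finType) (f : V -> nat) : nat :=
  \big[minn/max_col f]_(v : V) f v.

Definition span (V : finType) (f : V -> nat) : nat := max_col f - min_col f.

Definition is_lambda (V : finType) (E : {set {set V}}) (k : nat) : Prop :=
  (exists f : V -> nat, L21_colouring E f /\ span f = k) /\
  (forall f : V -> nat, L21_colouring E f -> k <= span f).

(* Main.v *)
Require Import Defs.
From mathcomp Require Import all_boot zify.
Set Implicit Arguments. Unset Strict Implicit. Unset Printing Implicit Defensive.

Lemma bigmin_le (T : finType) (x0 : nat) (F : T -> nat) i :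
  \big[minn/x0]_(v : T) F v <= F i.
Proof.
have : i \in index_enum T by rewrite mem_index_enum.
elim: (index_enum T) => [//|a r IH]; rewrite big_cons inE.
case/orP=> [/eqP->|Hi]; first exact: geq_minl.
exact: leq_trans (geq_minr _ _) (IH Hi).
Qed.

Lemma centre_sub (V : finType) (E : {set {set V}}) (C : {set V}) e :
  1 < #|E| -> is_star_centre E C -> e \in E -> C \subset e.
Proof.
move=> HE Hs He.
have : 0 < #|E :\ e| by move: HE; rewrite (cardsD1 e E) He; lia.
case/card_gt0P => e'; rewrite !inE => /andP[ne' He'].
have ne : e != e' by rewrite eq_sym.
by rewrite -(Hs e e' He He' ne) subsetIl.
Qed.

Lemma petal_uniq (V : finType) (E : {set {set V}}) (C : {set V}) v e1 e2 :
  is_star_centre E C -> e1 \in E -> e2 \in E -> v \notin C -> v \in e1 -> v \in e2 -> e1 = e2.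
Proof.
move=> Hs H1 H2 vC v1 v2; apply/eqP; apply/negPn/negP => ne.
by move: vC; rewrite -(Hs _ _ H1 H2 ne) inE v1 v2.
Qed.

Lemma card_V (V : finType) (E : {set {set V}}) (C : {set V}) r :
  1 < #|E| -> uniform r E -> is_star_centre E C ->
  #|C| + #|E| * (r - #|C|) <= #|V|.
Proof.
move=> HE Hu Hs.
set P := [set e :\: C | e in E].
have inj : {in E &, injective (fun e => e :\: C)}.
  move=> e1 e2 H1 H2 /= eq.
  apply/setP => x; case xC: (x \in C).
    by rewrite (subsetP (centre_sub HE Hs H1)) // (subsetP (centre_sub HE Hs H2)).
  by move/setP: eq => /(_ x); rewrite !inE xC.
have triv : trivIset P.
  apply/trivIsetP => A B /imsetP[e1 H1 ->] /imsetP[e2 H2 ->] neAB.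
  have ne : e1 != e2 by apply: contraNneq neAB => ->.
  rewrite -setI_eq0; apply/eqP/setP => x; rewrite !inE.
  apply/negP => /andP[/andP[xC x1] /andP[_ x2]].
  by move: xC; rewrite -(Hs _ _ H1 H2 ne) inE x1 x2.
have Hc : #|cover P| = \sum_(A in P) #|A| by apply/eqP; rewrite (leq_card_cover P).2.
rewrite big_imset //= in Hc.
rewrite (eq_bigr (fun _ => r - #|C|)) ?sum_nat_const in Hc; last first.
  by move=> e He; rewrite cardsD (setIidPr (centre_sub HE Hs He)) (Hu e He).
have Hsub : cover P \subset ~: C.
  rewrite cover_imset; apply/bigcupsP => e _; apply/subsetP => x.
  by rewrite !inE => /andP[].
have := subset_leq_card Hsub; have := cardsC C; rewrite Hc => H1 H2; rewrite -H1.
by rewrite leq_add2l.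
Qed.

Lemma lower (V : finType) (E : {set {set V}}) (C : {set V}) r (f : V -> nat) :
  1 < #|E| -> 0 < #|C| -> #|C| < r -> uniform r E -> is_star_centre E C ->
  covered_by_edges E -> L21_colouring E f ->
  #|E| * (r - #|C|) + 2 * #|C| - 1 <= span f.
Proof.
move=> HE HC Hr Hu Hs Hcov [H1 H2].
have adj : forall x w, x \in C -> w != x -> (f x + 2 <= f w) || (f w + 2 <= f x).
  move=> x w xC ne; have [e He we] := Hcov w.
  have nxw : x != w by rewrite eq_sym.
  exact: (H1 x w e nxw He (subsetP (centre_sub HE Hs He) x xC) we).
have inj : forall u v, u != v -> f u <> f v.
  move=> u v ne; have [e1 He1 v1] := Hcov v; have [e2 He2 u2] := Hcov u.
  case u1: (u \in e1).
    by have := H1 u v e1 ne He1 u1 v1; lia.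
  case vC: (v \in C).
    by have := adj v u vC ne; lia.
  have ne12 : e1 != e2 by apply: contraFneq u1 => ->.
  have uC : (u \in C) = false.
    by apply: contraFF u1 => uC; exact: (subsetP (centre_sub HE Hs He1)).
  move=> Hf.
  suff Hne : (e1 :&: e2) :\: [set u; v] != set0.
    by move: (H2 u v e1 e2 ne He1 He2 v1 u2 Hne); rewrite Hf eqxx.
  rewrite (Hs _ _ He1 He2 ne12).
  have [x0 x0C] := card_gt0P HC.
  apply/set0Pn; exists x0; rewrite !inE x0C andbT.
  by apply/negP => /orP[/eqP Hx|/eqP Hx]; [move: uC | move: vC]; rewrite -Hx x0C.
have [e0 He0] : exists e, e \in E by apply/card_gt0P; lia.
have [z zC0] : exists z, z \in e0 :\: C.
  by apply/card_gt0P; rewrite cardsD (setIidPr (centre_sub HE Hs He0)) (Hu e0 He0); lia.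
have zC : z \notin C by move: zC0; rewrite inE => /andP[].
set a := min_col f; set b := max_col f.
have ha : forall v, a <= f v by move=> v; exact: bigmin_le.
have hb : forall v, f v <= b by move=> v; exact: leq_bigmax.
have fzx : forall x, x \in C -> f x + 2 <= f z \/ f z + 2 <= f x.
  move=> x xC; have nzx : z != x by apply: contraNneq zC => ->.
  by have := adj x z xC nzx; case/orP; [left|right].
pose g x := if f x < f z then (f x).+1 else (f x).-1.
pose L := [seq f v | v <- enum V] ++ [seq g x | x <- enum C].
have uL : uniq L.
  rewrite cat_uniq; apply/and3P; split.
  - rewrite map_inj_in_uniq ?enum_uniq // => u v _ _ Huv.
    by apply/eqP; apply/negPn/negP => ne; exact: (inj u v ne Huv).
  - apply/hasPn => y /mapP[x]; rewrite mem_enum => xC ->.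
    apply/negP => /mapP[w _ Hw].
    have := fzx x xC; rewrite /g in Hw.
    case: (eqVneq w x) => [wx|nwx].
      by rewrite wx in Hw; case: ifP Hw; lia.
    have := adj x w xC nwx; case: ifP Hw; lia.
  - rewrite map_inj_in_uniq ?enum_uniq // => x y; rewrite !mem_enum => xC yC.
    rewrite /g => Hg; apply/eqP; apply/negPn/negP => ne.
    have := inj x y ne; have := fzx x xC; have := fzx y yC.
    case: ifP Hg; case: ifP; lia.
have sL : {subset L <= iota a (b - a).+1}.
  move=> y; rewrite mem_cat mem_iota => /orP[/mapP[v _ ->]|/mapP[x]].
    by have := ha v; have := hb v; lia.
  rewrite mem_enum => xC ->; rewrite /g.
  have := fzx x xC; have := ha x; have := hb x; have := ha z; have := hb z.
  case: ifP; lia.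
have := uniq_leq_size uL sL.
rewrite size_cat !size_map size_iota -!cardE.
have := card_V HE Hu Hs.
rewrite /span -/a -/b.
rewrite -?enumT -?cardT; lia.
Qed.

Lemma mul_step j1 j2 m : j1 < j2 -> j1 * m + m <= j2 * m.
Proof.
move=> H; have : j1.+1 * m <= j2 * m by rewrite leq_mul2r H orbT.
by rewrite mulSn addnC.
Qed.

Lemma mix_lt j i s m : i < m -> j < s -> j * m + i < m * s.
Proof.
move=> Hi Hj; have := mul_step m Hj; rewrite [m * s]mulnC; lia.
Qed.

Lemma upper (V : finType) (E : {set {set V}}) (C : {set V}) r :
  1 < #|E| -> 0 < #|C| -> #|C| < r -> uniform r E -> is_star_centre E C ->
  covered_by_edges E ->
  exists f : V -> nat, L21_colouring E f /\
     span f = #|E| * (r - #|C|) + 2 * #|C| - 1.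
Proof.
move=> HE HC Hr Hu Hs Hcov.
set m := #|E|; set c := #|C|; set s := r - c.
have [x0 x0C] := card_gt0P HC.
pose eo v := odflt set0 [pick e in E | v \in e].
have eoP : forall v, (eo v \in E) && (v \in eo v).
  move=> v; rewrite /eo; case: pickP => [e /andP[He ve]|none] /=; first by rewrite He ve.
  by have [e He ve] := Hcov v; move: (none e); rewrite He ve.
have eoE : forall v, eo v \in E by move=> v; case/andP: (eoP v).
have veo : forall v, v \in eo v by move=> v; case/andP: (eoP v).
have cardP : forall e, e \in E -> #|e :\: C| = s.
  by move=> e He; rewrite cardsD (setIidPr (centre_sub HE Hs He)) (Hu e He).
pose ie v := index (eo v) (enum E).
pose je v := index v (enum (eo v :\: C)).
pose kc v := index v (enum C).
pose g v := if v \in C then m * s + 1 + 2 * kc v else je v * m + ie v.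
have ieb : forall v, ie v < m by move=> v; rewrite /ie /m cardE index_mem mem_enum.
have jeb : forall v, v \notin C -> je v < s.
  by move=> v vC; rewrite /je -(cardP _ (eoE v)) cardE index_mem mem_enum inE vC veo.
have kcb : forall w, w \in C -> kc w < c.
  by move=> w wC; rewrite /kc /c cardE index_mem mem_enum.
have eo_e : forall v (e : {set V}), v \notin C -> v \in e -> e \in E -> eo v = e.
  by move=> v e vC ve He; apply: (petal_uniq Hs (eoE v) He vC (veo v) ve).
have ginj : forall u v, g u = g v -> u = v.
  move=> u v; rewrite /g; case uC: (u \in C); case vC: (v \in C) => Hg.
  - have Hk : kc u = kc v by lia.
    move: Hk; rewrite /kc => Hk.
    by rewrite -[u](nth_index x0 (s:=enum C)) ?mem_enum // Hk nth_index ?mem_enum.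
  - by have := mix_lt (ieb v) (jeb v (negbT vC)); lia.
  - by have := mix_lt (ieb u) (jeb u (negbT uC)); lia.
  - have Hj : je u = je v.
      case: (ltngtP (je u) (je v)) => [lt|gt|//].
        by have := mul_step m lt; have := ieb u; have := ieb v; lia.
      by have := mul_step m gt; have := ieb u; have := ieb v; lia.
    have Hi : ie u = ie v by rewrite Hj in Hg; lia.
    have Heo : eo u = eo v.
      move: Hi; rewrite /ie => Hi.
      by rewrite -[eo u](nth_index set0 (s:=enum E)) ?mem_enum // Hi nth_index ?mem_enum.
    move: Hj; rewrite /je Heo => Hj.
    have uin : u \in enum (eo v :\: C) by rewrite mem_enum -Heo inE uC veo.
    have vin : v \in enum (eo v :\: C) by rewrite mem_enum inE vC veo.
    by rewrite -[u](nth_index x0 uin) Hj nth_index.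
exists g; split.
  split.
    move=> u v e ne He ue ve.
    have gne : g u <> g v by move=> H; move: ne; rewrite (ginj _ _ H) eqxx.
    move: gne; rewrite /g; case uC: (u \in C); case vC: (v \in C) => gne.
    - lia.
    - by have := mix_lt (ieb v) (jeb v (negbT vC)); lia.
    - by have := mix_lt (ieb u) (jeb u (negbT uC)); lia.
    - have Hi : ie u = ie v.
        by rewrite /ie (eo_e u e (negbT uC) ue He) (eo_e v e (negbT vC) ve He).
      rewrite Hi in gne *.
      case: (ltngtP (je u) (je v)) => [lt|gt|eq].
      + by have := mul_step m lt; lia.
      + by have := mul_step m gt; lia.
      + by rewrite eq in gne.
  move=> u v e1 e2 ne _ _ _ _ _; apply/eqP => H; move: ne.
  by rewrite (ginj _ _ H) eqxx.
have Hmax : max_col g = m * s + 2 * c - 1.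
  apply/eqP; rewrite eqn_leq; apply/andP; split.
    apply/bigmax_leqP => v _; rewrite /g; case: ifP => vC.
      by have := kcb v vC; lia.
    by have := mix_lt (ieb v) (jeb v (negbT vC)); lia.
  pose xm := nth x0 (enum C) c.-1.
  have szC : size (enum C) = c by rewrite /c cardE.
  have xmC : xm \in C by rewrite -mem_enum mem_nth // szC; lia.
  have Hk : kc xm = c.-1 by rewrite /kc index_uniq ?enum_uniq // szC; lia.
  apply: leq_trans (leq_bigmax xm); rewrite /g xmC Hk; lia.
pose e0 := nth set0 (enum E) 0.
have szE : size (enum E) = m by rewrite /m cardE.
have He0 : e0 \in E by rewrite -mem_enum mem_nth // szE; lia.
have sz0 : size (enum (e0 :\: C)) = s by rewrite -cardE cardP.
pose v0 := nth x0 (enum (e0 :\: C)) 0.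
have v0in : v0 \in e0 :\: C by rewrite -mem_enum mem_nth // sz0 /s; lia.
move: (v0in); rewrite inE => /andP[v0C v0e].
have Heo : eo v0 = e0 by apply: eo_e.
have Hg0 : g v0 = 0.
  rewrite /g (negbTE v0C) /je /ie Heo /v0 index_uniq ?enum_uniq ?sz0 /s //.
  all: rewrite ?/e0 ?index_uniq ?enum_uniq ?szE //.
  1,2: move: HE Hr; rewrite /m /s /c; lia.
have Hmin : min_col g <= g v0 := bigmin_le _ _ _.
rewrite /span Hmax; rewrite Hg0 in Hmin; lia.
Qed.

Unset Implicit Arguments.
Theorem lemma3p9 (V : finType) (E : {set {set V}}) (C : {set V}) (r c m : nat) :
  2 <= m -> 1 <= c -> c < r ->
  uniform r E -> #|E| = m -> is_star_centre E C -> #|C| = c ->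
  covered_by_edges E ->
  is_lambda E (m * (r - c) + 2 * c - 1).
Proof.
move=> Hm Hc Hr Hu HE Hs HC Hcov.
have HE' : 1 < #|E| by rewrite HE.
have HC' : 0 < #|C| by rewrite HC.
have Hr' : #|C| < r by rewrite HC.
split.
  by have := upper HE' HC' Hr' Hu Hs Hcov; rewrite HE HC.
by move=> f Hf; have := lower HE' HC' Hr' Hu Hs Hcov Hf; rewrite HE HC.
Qed.
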